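(* Let $t\ge4$ be an integer and consider the Markov chain $(\mu_i)_{i\ge0}$ on $\mathbb{R}$ with transition kernel $P$ such that, given $\mu_{i-1}=\mu$, the random variable $\mu_i\left(1+\mu^2/t\right)^{-1/2}$ has the Student t distribution with $t$ degrees of freedom. Let $V^2(\mu)=\mu^2+1$, let $a>\sqrt{t/(t-3)}$ and $J=[-a,a]$. Then $$PV^2(\mu)\le\begin{cases}\lambda^2V^2(\mu)&\text{for }|\mu|>a,\\ K^2&\text{for }|\mu|\le a,\end{cases}$$ where $$\lambda^2=\frac{1}{t-2}\left(\frac{2t-3}{1+a^2}+1\right),\qquad K^2=2+\frac{a^2+2}{t-2}.$$ Moreover, if $\pi$ denotes the probability distribution on $\mathbb{R}$ with density proportional to $(1+\mu^2/t)^{-t/2}$, then $\pi(V^2)=\frac{2t-3}{t-3}$.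
   Context: This chain is the $\mu$-marginal of the two-step Gibbs sampler for the posterior of $(\mu,\kappa)$ in a normal model with prior $p(\mu,\kappa)\propto\kappa^{-1}$, normalized so that the sample mean is $0$ and $s^2=t$: $\kappa_i\sim\mathrm{Gamma}(t/2,\ \text{rate } (t/2)(t+\mu_{i-1}^2))$, then $\mu_i\sim N(0,1/(\kappa_i t))$. Equivalently the transition density is $p(\mu_i\mid\mu_{i-1})\propto(1+\mu_{i-1}^2/t)^{t/2}(1+\mu_{i-1}^2/t+\mu_i^2/t)^{-(t+1)/2}$ with a proportionality constant depending only on $t$. The distribution $\pi$ is its stationary distribution. $PV^2(\mu)=\int P(\mu,dy)V^2(y)$. *)

(* Defs.v *)
From HB Require Import structures.
From mathcomp Require Import all_boot all_order all_algebra.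
From mathcomp Require Import all_classical all_reals all_analysis.
Set Implicit Arguments. Unset Strict Implicit. Unset Printing Implicit Defensive.
Import Order.TTheory GRing.Theory Num.Theory.
Import numFieldNormedType.Exports.
Local Open Scope classical_set_scope.
Local Open Scope ring_scope.

Section Defs.
Variable R : realType.

Definition V2 (mu : R) : R := mu ^+ 2 + 1.

Definition studt_unnorm (t : nat) (x : R) : R :=
  powR (1 + x ^+ 2 / t%:R) (- ((t%:R + 1) / 2)).

Definition studt_const (t : nat) : R :=
  fine (\int[@lebesgue_measure R]_(x in [set: R]) (studt_unnorm t x)%:E)%E.

Definition studt_pdf (t : nat) (x : R) : R := studt_unnorm t x / studt_const t.

Definition kscale (t : nat) (mu : R) : R := Num.sqrt (1 + mu ^+ 2 / t%:R).

(* transition density: mu_i / kscale t mu has Student t_t law given mu_{i-1} = mu *)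
Definition kdens (t : nat) (mu y : R) : R :=
  studt_pdf t (y / kscale t mu) / kscale t mu.

Definition PV2 (t : nat) (mu : R) : \bar R :=
  (\int[@lebesgue_measure R]_(y in [set: R]) (V2 y * kdens t mu y)%:E)%E.

Definition pi_unnorm (t : nat) (x : R) : R :=
  powR (1 + x ^+ 2 / t%:R) (- (t%:R / 2)).

Definition pi_const (t : nat) : R :=
  fine (\int[@lebesgue_measure R]_(x in [set: R]) (pi_unnorm t x)%:E)%E.

Definition pi_pdf (t : nat) (x : R) : R := pi_unnorm t x / pi_const t.

Definition piV2 (t : nat) : \bar R :=
  (\int[@lebesgue_measure R]_(x in [set: R]) (V2 x * pi_pdf t x)%:E)%E.

End Defs.

(* Main.v *)
Require Import Defs.
From HB Require Import structures.
From mathcomp Require Import all_boot all_order all_algebra.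
From mathcomp Require Import all_classical all_reals all_analysis.
From mathcomp Require Import ring lra measurable_realfun.
Import Order.TTheory GRing.Theory Num.Theory.
Local Open Scope ring_scope.

Set Implicit Arguments. Unset Strict Implicit. Unset Printing Implicit Defensive.
Import numFieldNormedType.Exports.
Local Open Scope classical_set_scope.

Definition hh {R : realType} (c x : R) : R := 1 + x ^+ 2 / c.

Lemma hh_ge1 {R : realType} (c x : R) : 0 < c -> 1 <= hh c x.
Proof. by move=> c0; rewrite /hh lerDl divr_ge0 ?sqr_ge0 ?ltW. Qed.

Lemma hh_gt0 {R : realType} (c x : R) : 0 < c -> 0 < hh c x.
Proof. by move=> c0; apply: lt_le_trans (hh_ge1 x c0). Qed.

Lemma is_derive_hh {R : realType} (c x : R) :
  is_derive x 1 (hh c) (2 * x / c).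
Proof.
rewrite /hh; apply: is_derive_eq.
rewrite scaler0 !add0r mul1r scaler1.
by rewrite [c^-1 *: _]mulrC mulr2n !mulrDl mul1r.
Qed.

Definition gg {R : realType} (c q x : R) : R := powR (hh c x) (- q).
Definition FF {R : realType} (c q x : R) : R := x * powR (hh c x) (1 - q).
Definition ff {R : realType} (c q x : R) : R :=
  gg c q x * (1 - (2 * q - 3) / c * x ^+ 2).

Lemma is_derive_gp {R : realType} (c p x : R) : 0 < c ->
  is_derive x 1 (fun y => powR (hh c y) p)
    (p * powR (hh c x) (p - 1) * (2 * x / c)).
Proof.
move=> c0.
have h1 := is_derive1_powR p (hh_gt0 x c0).
exact: (is_derive1_comp h1 (is_derive_hh c x)).
Qed.

Lemma powR_hh_split {R : realType} (c q x : R) : 0 < c ->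
  powR (hh c x) (1 - q) = hh c x * gg c q x.
Proof.
move=> c0; rewrite /gg powRD ?powRr1 ?(ltW (hh_gt0 x c0)) //.
by rewrite (gt_eqF (hh_gt0 x c0)) implybT.
Qed.

Lemma is_derive_FF {R : realType} (c q x : R) : 0 < c ->
  is_derive x 1 (FF c q) (ff c q x).
Proof.
move=> c0.
have := is_deriveM (is_derive_id x 1) (is_derive_gp (1 - q) x c0).
rewrite /FF => H.
apply: (is_derive_eq H).
rewrite powR_hh_split // /ff /gg /hh.
have -> : 1 - q - 1 = - q by ring.
rewrite /GRing.scale /=.
set P := (_ `^ _).
by field; rewrite gt_eqF.
Qed.

Lemma gg_cont {R : realType} (c q : R) : 0 < c -> continuous (gg c q).
Proof.
move=> c0 x; apply/differentiable_continuous/derivable1_diffP.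
exact: (@ex_derive _ _ _ _ _ _ _ (is_derive_gp (- q) x c0)).
Qed.

Lemma ff_cont {R : realType} (c q : R) : 0 < c -> continuous (ff c q).
Proof.
move=> c0 x; apply: continuousM; first exact: gg_cont.
apply/differentiable_continuous/derivable1_diffP.
exact: ex_derive.
Qed.

Lemma FF_cont {R : realType} (c q : R) : 0 < c -> continuous (FF c q).
Proof.
move=> c0 x; apply/differentiable_continuous/derivable1_diffP.
exact: (@ex_derive _ _ _ _ _ _ _ (is_derive_FF q x c0)).
Qed.

Lemma FF_derive1 {R : realType} (c q : R) : 0 < c -> (FF c q)^`()%classic =1 ff c q.
Proof.
move=> c0 x; rewrite derive1E.
exact: (@derive_val _ _ _ _ _ _ _ (is_derive_FF q x c0)).
Qed.

Lemma FF_cvg {R : realType} (c q : R) : 0 < c -> 2 <= q ->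
  FF c q x @[x --> +oo] --> 0.
Proof.
move=> c0 q2.
have inv0 : (fun x : R => c * x^-1) @ +oo --> (0:R).
  rewrite -(mulr0 c); apply: cvgMl_tmp.
  apply/(gtr0_cvgV0 (f := @id R)); last exact: cvg_id.
  by near=> x; near: x; exists 0; split => // x /=.
apply: (@squeeze_cvgr _ _ _ _ (cst 0) (fun x : R => c * x^-1)) => //; last exact: cvg_cst.
near=> x.
have x0 : 0 < x by near: x; exists 0; split => //.
have h1 := hh_ge1 x c0.
have hp := hh_gt0 x c0.
rewrite /FF /cst; apply/andP; split.
  by rewrite mulr_ge0 ?powR_ge0 // ltW.
have le1 : powR (hh c x) (1 - q) <= (hh c x)^-1.
  by rewrite -powR_inv1 ?(ltW hp) //; apply: (ler_powR h1); lra.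
apply: (le_trans (ler_wpM2l (ltW x0) le1)).
have cx : 0 < c + x ^+ 2 by rewrite ltr_pwDl ?sqr_ge0.
have -> : x * (hh c x)^-1 = c * x / (c + x ^+ 2).
  by rewrite /hh; field; rewrite ?gt_eqF // -[X in X != 0](@mulfK _ c) ?gt_eqF // mulrDl mul1r divfK ?gt_eqF // gt_eqF.
rewrite -subr_ge0.
have -> : c / x - c * x / (c + x ^+ 2) = c ^+ 2 / (x * (c + x ^+ 2)).
  by field; rewrite ?gt_eqF.
by rewrite divr_ge0 ?sqr_ge0 ?mulr_ge0 ?ltW.
Unshelve. all: end_near. Qed.

Lemma cvg_Kinv {R : realType} (K : R) : K / x @[x --> +oo] --> 0.
Proof.
rewrite -(mulr0 K); apply: cvgMl_tmp.
apply/(gtr0_cvgV0 (f := @id R)); last exact: cvg_id.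
by near=> x; near: x; exists 0; split => // x /=.
Unshelve. all: end_near. Qed.

Lemma is_derive_1p {R : realType} (x : R) :
  is_derive x 1 (fun y : R => 1 + y) 1.
Proof.
have := is_deriveD (@is_derive_cst R R^o R^o 1 x 1) (is_derive_id x 1).
by rewrite add0r.
Qed.

Definition BB {R : realType} (K x : R) : R := K * powR (1 + x) (-2).
Definition BF {R : realType} (K x : R) : R := (- K) * powR (1 + x) (-1).

Lemma is_derive_BF {R : realType} (K x : R) : -1 < x ->
  is_derive x 1 (BF K) (BB K x).
Proof.
move=> x1.
have x1' : 0 < 1 + x by lra.
have h1 := is_derive1_powR (-1) x1'.
have h2 := is_derive_1p x.
have h3 := is_derive1_comp h1 h2.
rewrite /BF /BB; apply: is_derive_eq.
have -> : (-1 - 1 : R) = -2 by ring.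
by rewrite /GRing.scale /= mulr1 mulNr mulN1r mulrN opprK.
Qed.

Lemma BF_cont {R : realType} (K x : R) : -1 < x -> {for x, continuous (BF K)}.
Proof.
move=> x1; apply/differentiable_continuous/derivable1_diffP.
exact: (@ex_derive _ _ _ _ _ _ _ (is_derive_BF K x1)).
Qed.

Lemma BB_cont {R : realType} (K x : R) : -1 < x -> {for x, continuous (BB K)}.
Proof.
move=> x1; have x1' : 0 < 1 + x by lra.
have h3 := is_derive1_comp (is_derive1_powR (-2) x1') (is_derive_1p x).
apply: continuousM; first exact: cst_continuous.
apply/differentiable_continuous/derivable1_diffP.
exact: (@ex_derive _ _ _ _ _ _ _ h3).
Qed.

Local Open Scope ereal_scope.
Lemma BB_integral {R : realType} (K : R) : (0 <= K)%R ->
  \int[@lebesgue_measure R]_(x in `[0%R, +oo[) (BB K x)%:E = K%:E.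
Proof.
move=> K0.
rewrite (@ge0_continuous_FTC2y _ (BB K) (BF K) 0%R 0%R).
- by rewrite /BF addr0 powR1 mulr1 EFinN oppeK add0e.
- by move=> x x0; rewrite /BB mulr_ge0 ?powR_ge0.
- apply: continuous_in_subspaceT => x; rewrite inE /= in_itv /= andbT => x0.
  by apply: BB_cont; lra.
- apply: (@squeeze_cvgr _ _ _ _ (fun x : R => - K / x)%R (cst 0%R)); last 2 first.
    by rewrite -oppr0; under eq_fun do rewrite mulNr; apply: cvgN; exact: cvg_Kinv.
  exact: cvg_cst.
  near=> x.
  have x0 : (0 < x)%R by near: x; exists 0%R; split => //.
  have x1 : (0 < 1 + x)%R by lra.
  rewrite /BF /cst (powR_inv1 (ltW x1)); apply/andP; split; last first.
    by rewrite mulNr oppr_le0 divr_ge0 // ltW.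
  rewrite !mulNr lerN2 ler_wpM2l // lef_pV2 ?posrE //; lra.
- move=> x x0; have x1 : (-1 < x)%R by lra.
  exact: (@ex_derive _ _ _ _ _ _ _ (is_derive_BF K x1)).
- apply: cvg_at_right_filter; apply: BF_cont; lra.
- move=> x; rewrite in_itv /= andbT => x0; have x1 : (-1 < x)%R by lra.
  by rewrite derive1E; exact: (@derive_val _ _ _ _ _ _ _ (is_derive_BF K x1)).
Unshelve. all: end_near. Qed.

Local Close Scope ereal_scope.

Lemma dom_bound {R : realType} (c q x : R) : 1 <= c -> 2 <= q -> 0 <= x ->
  (1 + x ^+ 2) * gg c q x <= BB (2 * c ^+ 2) x.
Proof.
move=> c1 q2 x0; have c0 : 0 < c by lra.
have hp := hh_gt0 x c0; have h1 := hh_ge1 x c0.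
have g0 : 0 <= gg c q x by rewrite /gg powR_ge0.
apply: (le_trans (y := (c + x ^+ 2) * gg c q x)).
  by rewrite ler_wpM2r // lerD2r.
have -> : c + x ^+ 2 = c * hh c x by rewrite /hh; field; rewrite gt_eqF.
rewrite -mulrA -powR_hh_split //.
have le1 : powR (hh c x) (1 - q) <= (hh c x)^-1.
  by rewrite -powR_inv1 ?(ltW hp) //; apply: (ler_powR h1); lra.
apply: (le_trans (ler_wpM2l (ltW c0) le1)).
have x1 : 0 < 1 + x by lra.
rewrite /BB powR_invn ?(ltW x1) //.
have cx : 0 < c + x ^+ 2 by rewrite ltr_pwDl ?sqr_ge0.
rewrite -subr_ge0.
have -> : 2 * c ^+ 2 * (1 + x) ^- 2 - c * (hh c x)^-1
   = c ^+ 2 * ((x - 1) ^+ 2 + 2 * (c - 1)) / ((1 + x) ^+ 2 * (c + x ^+ 2)).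
  by rewrite /hh; field; rewrite ?gt_eqF // ?mulf_neq0 ?expf_neq0 ?gt_eqF //;
     rewrite -[X in X != 0](@mulfK _ c) ?gt_eqF // mulrDl mul1r divfK ?gt_eqF.
apply: divr_ge0; last by rewrite mulr_ge0 ?sqr_ge0 ?ltW.
by rewrite mulr_ge0 ?sqr_ge0 // addr_ge0 ?sqr_ge0 //; lra.
Qed.

Notation lmu := (@lebesgue_measure _).

Lemma BB_int {R : realType} (K : R) : 0 <= K ->
  lmu.-integrable `[0%R, +oo[ (EFin \o BB K).
Proof.
move=> K0; apply/integrableP; split.
  apply/measurable_EFinP; apply: subspace_continuous_measurable_fun => //.
  apply: continuous_in_subspaceT => x; rewrite inE /= in_itv /= andbT => x0.
  by apply: BB_cont; lra.
under eq_integral => x.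
  rewrite inE /= in_itv /= andbT => x0.
  rewrite ger0_norm; last by rewrite /BB mulr_ge0 ?powR_ge0.
  over.
by rewrite BB_integral // ltry.
Qed.

Lemma x2gg_cont {R : realType} (c q : R) : 0 < c ->
  continuous (fun x : R => x ^+ 2 * gg c q x).
Proof.
move=> c0 x; apply: (continuousM (s := fun x : R => x ^+ 2) (t := gg c q)); last exact: gg_cont.
apply/differentiable_continuous/derivable1_diffP; exact: ex_derive.
Qed.

Lemma gg_int {R : realType} (c q : R) : 1 <= c -> 2 <= q ->
  lmu.-integrable `[0%R, +oo[ (EFin \o gg c q).
Proof.
move=> c1 q2; have c0 : 0 < c by lra.
have Kp : 0 <= 2 * c ^+ 2 by rewrite mulr_ge0 ?sqr_ge0.
apply: (le_integrable _ _ _ (BB_int Kp)) => //.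
- apply/measurable_EFinP; apply: subspace_continuous_measurable_fun => //.
  apply: continuous_subspaceT; exact: gg_cont.
- move=> x; rewrite /= in_itv /= andbT => x0.
  have g0 : 0 <= gg c q x by rewrite /gg powR_ge0.
  have B0 : 0 <= BB (2 * c ^+ 2) x by rewrite /BB mulr_ge0 ?powR_ge0.
  rewrite lee_fin ger0_norm // (ger0_norm B0).
  apply: (le_trans _ (dom_bound c1 q2 x0)).
  by rewrite ler_peMl // lerDl sqr_ge0.
Qed.

Lemma x2gg_int {R : realType} (c q : R) : 1 <= c -> 2 <= q ->
  lmu.-integrable `[0%R, +oo[ (EFin \o (fun x => x ^+ 2 * gg c q x)).
Proof.
move=> c1 q2; have c0 : 0 < c by lra.
have Kp : 0 <= 2 * c ^+ 2 by rewrite mulr_ge0 ?sqr_ge0.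
apply: (le_integrable _ _ _ (BB_int Kp)) => //.
- apply/measurable_EFinP; apply: subspace_continuous_measurable_fun => //.
  apply: continuous_subspaceT; exact: x2gg_cont.
- move=> x; rewrite /= in_itv /= andbT => x0.
  have g0 : 0 <= gg c q x by rewrite /gg powR_ge0.
  have B0 : 0 <= BB (2 * c ^+ 2) x by rewrite /BB mulr_ge0 ?powR_ge0.
  rewrite lee_fin ger0_norm ?mulr_ge0 ?sqr_ge0 // (ger0_norm B0).
  apply: (le_trans _ (dom_bound c1 q2 x0)).
  by rewrite ler_wpM2r // lerDr.
Qed.

Lemma FF_derivable {R : realType} (c q x : R) : 0 < c -> derivable (FF c q) x 1.
Proof. move=> c0; exact: (@ex_derive _ _ _ _ _ _ _ (is_derive_FF q x c0)). Qed.

Local Open Scope ereal_scope.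

Lemma ff_integral0 {R : realType} (c q : R) : (1 <= c)%R -> (2 <= q)%R ->
  \int[lmu]_(x in `[0%R, +oo[) (ff c q x)%:E = 0.
Proof.
move=> c1 q2; have c0 : (0 < c)%R by lra.
have mff : forall D, measurable D -> measurable_fun D (EFin \o ff c q).
  move=> D mD; apply/measurable_EFinP; apply: subspace_continuous_measurable_fun => //.
  by apply: continuous_subspaceT; exact: ff_cont.
rewrite (@itv_bndbnd_setU _ _ _ (BRight c)) //; last by rewrite bnd_simp ltW.
rewrite integral_setU //; last 2 first.
- by apply: mff; apply: measurableU.
- rewrite disj_set2E; apply/eqP/seteqP; split => x //=.
  by rewrite !in_itv /= => -[/andP[_ xc] /andP[cx _]]; lra.
rewrite integral_itv_obnd_cbnd; last by apply: mff.
rewrite (@continuous_FTC2 _ (ff c q) (FF c q) 0%R c c0); last 3 first.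
- by apply: continuous_subspaceT; exact: ff_cont.
- split.
  + by move=> x _; exact: FF_derivable.
  + by apply: cvg_at_right_filter; exact: FF_cont.
  + by apply: cvg_at_left_filter; exact: FF_cont.
- by move=> x _; exact: FF_derive1.
rewrite (@le0_continuous_FTC2y _ (ff c q) (FF c q) c 0%R).
- by rewrite /FF mul0r add0e -!EFinB subr0 subrr.
- move=> x cx; rewrite /ff; apply: mulr_ge0_le0; first by rewrite /gg powR_ge0.
  rewrite subr_le0.
  have x0 : (0 < x)%R by lra.
  have : (1 <= (2 * q - 3) * c)%R by nra.
  move/le_trans; apply.
  rewrite -mulrA ler_pM2l; last by lra.
  rewrite -ler_pdivrMl ?invr_gt0 // invrK.
  by rewrite expr2; apply: ler_pM => //; lra.
- by apply: continuous_in_subspaceT => x _; exact: ff_cont.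
- exact: FF_cvg.
- by apply: cvg_at_right_filter; exact: FF_cont.
- by move=> x _; exact: FF_derivable.
- by move=> x _; exact: FF_derive1.
Qed.

Lemma half_rel {R : realType} (c q : R) : (1 <= c)%R -> (2 <= q)%R ->
  \int[lmu]_(x in `[0%R, +oo[) (gg c q x)%:E =
  ((2 * q - 3) / c)%:E * \int[lmu]_(x in `[0%R, +oo[) (x ^+ 2 * gg c q x)%:E.
Proof.
move=> c1 q2; have c0 : (0 < c)%R by lra.
have := ff_integral0 c1 q2.
have i2 := x2gg_int c1 q2.
have i2' : lmu.-integrable `[0%R, +oo[
    (EFin \o (fun x => (2 * q - 3) / c * (x ^+ 2 * gg c q x))%R).
  have i3 : lmu.-integrable `[0%R, +oo[
      (fun x => ((2 * q - 3) / c)%:E * (x ^+ 2 * gg c q x)%:E).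
    by apply: integrableZl.
  by apply: eq_integrable i3 => // x _; rewrite /= EFinM.
have E : forall x, ff c q x = (gg c q x - (2 * q - 3) / c * (x ^+ 2 * gg c q x))%R.
  by move=> x; rewrite /ff; ring.
under eq_integral do rewrite E EFinB.
rewrite integralB_EFin // ?gg_int //.
under [X in _ - X = _ -> _]eq_integral do rewrite EFinM.
rewrite integralZl //.
have fA : \int[lmu]_(x in `[0%R, +oo[) (gg c q x)%:E \is a fin_num.
  by apply: integrable_fin_num => //; exact: gg_int.
move/eqP; rewrite sube_eq // ?add0e; first by move/eqP.
Qed.

Lemma gg_half_pos {R : realType} (c q : R) : (1 <= c)%R -> (2 <= q)%R ->
  0 < \int[lmu]_(x in `[0%R, +oo[) (gg c q x)%:E.
Proof.
move=> c1 q2; have c0 : (0 < c)%R by lra.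
pose k := powR 2 (- q) : R.
have k0 : (0 < k)%R by rewrite powR_gt0.
apply: (@lt_le_trans _ _ (\int[lmu]_(x in `[0%R, 1%R]) (cst k%:E x))).
  rewrite integral_cst //= lebesgue_measure_itv /= lte_fin ltr01 oppr0 adde0 mule1.
  by rewrite lte_fin.
apply: (@le_trans _ _ (\int[lmu]_(x in `[0%R, 1%R]) (gg c q x)%:E)).
  apply: ge0_le_integral => //.
  - by move=> x _; rewrite lee_fin ltW.
  - apply/measurable_EFinP; apply: subspace_continuous_measurable_fun => //.
    by apply: continuous_in_subspaceT => x _; exact: gg_cont.
  - move=> x; rewrite /= in_itv /= => /andP[x0 x1].
    rewrite lee_fin /k /gg !powRN lef_pV2 ?posrE ?powR_gt0 ?hh_gt0 //.
    apply: ge0_ler_powR; first lra.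
    + by rewrite nnegrE ltW ?hh_gt0.
    + by rewrite nnegrE.
    rewrite /hh (_ : 2 = 1 + 1)%R //; rewrite lerD2l ler_pdivrMr // mul1r.
    by rewrite expr2; apply: (le_trans _ c1); rewrite -[1%R]mulr1 ler_pM.
apply: ge0_subset_integral => //.
- apply/measurable_EFinP; apply: subspace_continuous_measurable_fun => //.
  by apply: continuous_in_subspaceT => x _; exact: gg_cont.
- by move=> x _; rewrite lee_fin /gg powR_ge0.
- by move=> x /=; rewrite !in_itv /= => /andP[-> _].
Qed.

Lemma whole_line {R : realType} (f : R -> R) : (forall x, 0 <= f x)%R ->
  continuous f -> (forall x, f (- x) = f x)%R ->
  lmu.-integrable `[0%R, +oo[ (EFin \o f) ->
  lmu.-integrable setT (EFin \o f) /\
  \int[lmu]_x (f x)%:E = 2%:E * \int[lmu]_(x in `[0%R, +oo[) (f x)%:E.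
Proof.
move=> f0 cf ev fi.
have E : \int[lmu]_x (f x)%:E = 2%:E * \int[lmu]_(x in `[0%R, +oo[) (f x)%:E.
  rewrite ge0_symfun_integralT //; last by move=> x /=; rewrite ev.
  by rewrite set_itvcy.
split => //; apply/integrableP; split.
  apply/measurable_EFinP; apply: subspace_continuous_measurable_fun => //.
  by apply: continuous_subspaceT.
under eq_integral do rewrite gee0_abs ?lee_fin //.
have fA : \int[lmu]_(x in `[0%R, +oo[) (f x)%:E \is a fin_num.
  by apply: integrable_fin_num.
by rewrite E -(fineK fA) -EFinM ltry.
Qed.

Lemma core {R : realType} (c q : R) : (1 <= c)%R -> (2 <= q)%R ->
  [/\ lmu.-integrable setT (EFin \o gg c q),
      lmu.-integrable setT (EFin \o (fun x => x ^+ 2 * gg c q x)%R),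
      \int[lmu]_x (gg c q x)%:E = (fine (\int[lmu]_x (gg c q x)%:E))%:E,
      \int[lmu]_x (x ^+ 2 * gg c q x)%:E =
         (fine (\int[lmu]_x (x ^+ 2 * gg c q x)%:E))%:E &
      ((0 < fine (\int[lmu]_x (gg c q x)%:E))%R /\
      (c * fine (\int[lmu]_x (gg c q x)%:E) =
       (2 * q - 3) * fine (\int[lmu]_x (x ^+ 2 * gg c q x)%:E))%R)].
Proof.
move=> c1 q2; have c0 : (0 < c)%R by lra.
have ev : forall x, gg c q (- x) = gg c q x by move=> x; rewrite /gg /hh sqrrN.
have [i0 E0] := whole_line (fun x => powR_ge0 _ _) (@gg_cont _ c q c0) ev (gg_int c1 q2).
have [i2 E2] := @whole_line _ (fun x => x ^+ 2 * gg c q x)%R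
  (fun x => mulr_ge0 (sqr_ge0 x) (powR_ge0 _ _)) (@x2gg_cont _ c q c0)
  (fun x => ltac:(by rewrite /= sqrrN ev)) (x2gg_int c1 q2).
have f0 : \int[lmu]_x (gg c q x)%:E \is a fin_num by apply: integrable_fin_num.
have f2 : \int[lmu]_x (x ^+ 2 * gg c q x)%:E \is a fin_num by apply: integrable_fin_num.
split => //; try by rewrite fineK.
split.
  rewrite -lte_fin fineK // E0; apply: mule_gt0 => //; exact: gg_half_pos.
have fJ2 : \int[lmu]_(x in `[0%R, +oo[) (x ^+ 2 * gg c q x)%:E \is a fin_num.
  by apply: integrable_fin_num => //; exact: x2gg_int.
apply: EFin_inj; rewrite !EFinM !fineK // E0 E2 half_rel // -(fineK fJ2).
set J := fine _; rewrite -!EFinM; congr EFin; field; lra.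
Qed.


Local Open Scope ereal_scope.
Lemma lin_int {R : realType} (a b : R) (f g : R -> R) :
  lmu.-integrable setT (EFin \o f) -> lmu.-integrable setT (EFin \o g) ->
  \int[lmu]_x ((a * f x + b * g x)%R)%:E =
  (a * fine (\int[lmu]_x (f x)%:E) + b * fine (\int[lmu]_x (g x)%:E))%:E.
Proof.
move=> fi gi.
have fa : lmu.-integrable setT (EFin \o (fun x => a * f x)%R).
  have i3 : lmu.-integrable setT (fun x => a%:E * (f x)%:E) by apply: integrableZl.
  by apply: eq_integrable i3 => // x _; rewrite /= EFinM.
have gb : lmu.-integrable setT (EFin \o (fun x => b * g x)%R).
  have i3 : lmu.-integrable setT (fun x => b%:E * (g x)%:E) by apply: integrableZl.
  by apply: eq_integrable i3 => // x _; rewrite /= EFinM.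
under eq_integral do rewrite EFinD.
rewrite (integralD_EFin _ fa gb) //.
have Ea : \int[lmu]_x ((a * f x)%R)%:E = a%:E * \int[lmu]_x (f x)%:E.
  by under eq_integral do rewrite EFinM; apply: integralZl.
have Eb : \int[lmu]_x ((b * g x)%R)%:E = b%:E * \int[lmu]_x (g x)%:E.
  by under eq_integral do rewrite EFinM; apply: integralZl.
rewrite Ea Eb EFinD !EFinM !fineK //; by apply: integrable_fin_num.
Qed.
Local Close Scope ereal_scope.

Lemma piV2_eq {R : realType} (t : nat) : (4 <= t)%N ->
  piV2 R t = ((2 * t%:R - 3) / (t%:R - 3))%:E.
Proof.
move=> t4; have c4 : (4 <= t%:R :> R) by rewrite (ler_nat R 4 t).
have c1 : (1 <= t%:R :> R) by lra.
have q2 : (2 <= t%:R / 2 :> R) by lra.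
have [i0 i2 _ _ [Z0 rel]] := @core R (t%:R) (t%:R / 2) c1 q2.
rewrite /piV2 /pi_pdf /pi_const.
change (pi_unnorm t) with (gg (t%:R : R) (t%:R / 2)).
set Z := fine _.
have E : forall x : R, V2 x * (gg t%:R (t%:R / 2) x / Z) =
    Z^-1 * (x ^+ 2 * gg t%:R (t%:R / 2) x) + Z^-1 * gg t%:R (t%:R / 2) x.
  by move=> x; rewrite /V2; ring.
under eq_integral do rewrite E.
rewrite (lin_int _ _ i2 i0) -/Z; congr EFin.
move: rel; rewrite -/Z; set I2 := fine _ => rel.
have h3 : (t%:R - 3 : R) != 0 by rewrite gt_eqF // subr_gt0; lra.
have hZ : Z != 0 by rewrite gt_eqF.
have eI2 : I2 = t%:R * Z / (t%:R - 3).
  by rewrite rel; field.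
by rewrite eI2; field; rewrite h3 hZ.
Qed.

Lemma cont_pg {R : realType} (c q k : R) : 0 < c ->
  continuous (fun y : R => (y ^+ 2 + 1) * gg c q y * k).
Proof.
move=> c0 x.
apply: (continuousM (s := fun y : R => (y ^+ 2 + 1) * gg c q y) (t := cst k)); last first.
  exact: cst_continuous.
apply: (continuousM (s := fun y : R => y ^+ 2 + 1) (t := gg c q)); last exact: gg_cont.
apply/differentiable_continuous/derivable1_diffP; exact: ex_derive.
Qed.

Lemma is_derive_lin {R : realType} (s x : R) : is_derive x 1 (fun u : R => s * u) s.
Proof. by apply: is_derive_eq; rewrite /GRing.scale /= mulr1. Qed.

Lemma PV2_eq {R : realType} (t : nat) (mu : R) : (4 <= t)%N ->
  PV2 t mu = ((t%:R + mu ^+ 2) / (t%:R - 2) + 1)%:E.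
Proof.
move=> t4; have c4 : (4 <= t%:R :> R) by rewrite (ler_nat R 4 t).
have c1 : (1 <= t%:R :> R) by lra.
have c0 : (0 < t%:R :> R) by lra.
have q2 : (2 <= (t%:R + 1) / 2 :> R) by lra.
have [i0 i2 _ _ [Z0 rel]] := @core R (t%:R) ((t%:R + 1) / 2) c1 q2.
rewrite /PV2 /kdens /studt_pdf /studt_const.
change (studt_unnorm t) with (gg (t%:R : R) ((t%:R + 1) / 2)).
set Z := fine _.
set c := (t%:R : R). set q := ((t%:R + 1) / 2 : R).
have hm := hh_gt0 mu c0.
set s := kscale t mu.
have s0 : 0 < s by rewrite /s /kscale sqrtr_gt0.
have s2 : s ^+ 2 = hh c mu by rewrite /s /kscale sqr_sqrtr // ltW.
have cs0 : 0 < c * s ^+ 2 by rewrite mulr_gt0 // exprn_gt0.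
pose G' := fun y : R => (y ^+ 2 + 1) * gg (c * s ^+ 2) q y * (Z^-1 * s^-1).
have E : forall y : R, V2 y * (gg c q (y / s) / Z / s) = G' y.
  move=> y.
  have eg : gg c q (y / s) = gg (c * s ^+ 2) q y.
    by rewrite /gg; congr (powR _ _); rewrite /hh; field; rewrite ?gt_eqF.
  by rewrite /G' /V2 eg; field; rewrite !gt_eqF.
under eq_integral do rewrite E.
have DF : (fun u : R => s * u)^`()%classic = cst s.
  by apply/funext => x; rewrite derive1E; exact: (@derive_val _ _ _ _ _ _ _ (is_derive_lin s x)).
rewrite (@increasing_ge0_integration_by_substitutionT _ (fun u => s * u) G'); first last.
- move=> x; rewrite /G'; apply: mulr_ge0; last by rewrite divr_ge0 // ?invr_ge0 ltW.
  by apply: mulr_ge0; [rewrite addr_ge0 ?sqr_ge0 | rewrite /gg powR_ge0].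
- exact: cont_pg.
- by apply: (gt0_cvgMry s0); exact: cvg_id.
- by apply: (gt0_cvgMrNy s0); exact: cvg_id.
- by move=> x; exact: (@ex_derive _ _ _ _ _ _ _ (is_derive_lin s x)).
- by rewrite DF; exact: is_cvg_cst.
- by rewrite DF; exact: is_cvg_cst.
- by rewrite DF; exact: cst_continuous.
- by move=> x y xy; rewrite ltr_pM2l.
rewrite DF.
transitivity (\int[lmu]_x ((s ^+ 2 / Z * (x ^+ 2 * gg c q x) + Z^-1 * gg c q x)%R)%:E)%E.
  apply: eq_integral => x _; congr EFin; rewrite /= /G'.
  have eg : gg (c * s ^+ 2) q (s * x) = gg c q x.
    by rewrite /gg; congr (powR _ _); rewrite /hh; field; rewrite !gt_eqF.
  change (G' (s * x) * s = s ^+ 2 / Z * (x ^+ 2 * gg c q x) + Z^-1 * gg c q x).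
  by rewrite /G' eg; field; rewrite !gt_eqF.
rewrite (lin_int _ _ i2 i0) -/Z; congr EFin.
move: rel; rewrite -/Z; set I2 := fine _ => rel.
have h2 : (t%:R - 2 : R) != 0 by rewrite gt_eqF // subr_gt0; lra.
have hZ : Z != 0 by rewrite gt_eqF.
have eI2 : I2 = t%:R * Z / (t%:R - 2).
  by rewrite rel; field.
rewrite s2 eI2 /hh /c; field.
by rewrite h2 hZ gt_eqF.
Qed.


Unset Implicit Arguments.
Local Close Scope classical_set_scope.

Theorem proposition7p1 (R : realType) (t : nat) (a : R)
  (ht : (4 <= t)%N) (ha : Num.sqrt (t%:R / (t%:R - 3)) < a) :
  let lambda2 := (1 / (t%:R - 2)) * ((2 * t%:R - 3) / (1 + a ^+ 2) + 1) in
  let K2 := 2 + (a ^+ 2 + 2) / (t%:R - 2) in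
  (forall mu : R, a < `|mu| -> (PV2 t mu <= (lambda2 * V2 mu)%:E)%E) /\
  (forall mu : R, `|mu| <= a -> (PV2 t mu <= K2%:E)%E) /\
  piV2 R t = ((2 * t%:R - 3) / (t%:R - 3))%:E.
Proof.
move=> lambda2 K2.
have c4 : (4 <= t%:R :> R) by rewrite (ler_nat R 4 t).
have a0 : 0 < a by apply: le_lt_trans ha; exact: sqrtr_ge0.
have h2 : (t%:R - 2 : R) != 0 by rewrite gt_eqF // subr_gt0; lra.
have hA : (1 + a ^+ 2 : R) != 0 by rewrite gt_eqF // ltr_pwDl ?sqr_ge0.
split; [|split]; last exact: piV2_eq.
- move=> mu amu; rewrite PV2_eq // lee_fin /lambda2 /V2.
  have m2 : a ^+ 2 <= mu ^+ 2.
    rewrite -[mu ^+ 2]real_normK ?num_real // !expr2.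
    by apply: ler_pM; rewrite ?ltW.
  rewrite -subr_ge0.
  have -> : 1 / (t%:R - 2) * ((2 * t%:R - 3) / (1 + a ^+ 2) + 1) * (mu ^+ 2 + 1) -
      ((t%:R + mu ^+ 2) / (t%:R - 2) + 1) =
      (2 * t%:R - 3) * (mu ^+ 2 - a ^+ 2) / ((1 + a ^+ 2) * (t%:R - 2)).
    by field; rewrite h2 hA.
  apply: divr_ge0; first by apply: mulr_ge0; lra.
  by apply: mulr_ge0; [rewrite addr_ge0 ?sqr_ge0 | lra].
- move=> mu amu; rewrite PV2_eq // lee_fin /K2.
  have m2 : mu ^+ 2 <= a ^+ 2.
    rewrite -[mu ^+ 2]real_normK ?num_real // !expr2.
    by apply: ler_pM; rewrite ?normr_ge0.
  rewrite -subr_ge0.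
  have -> : 2 + (a ^+ 2 + 2) / (t%:R - 2) - ((t%:R + mu ^+ 2) / (t%:R - 2) + 1) =
      (a ^+ 2 - mu ^+ 2) / (t%:R - 2).
    by field.
  by apply: divr_ge0; lra.
Qed.
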